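(* Let $P^{(1)},\dots,P^{(m)}\in\{I,X,Y,Z\}^n$ be phase-free Pauli strings. Consider the certification procedure: maintain a dictionary $D$ from labeled patterns $(A,a)$ (with $A\subseteq\{1,\dots,n\}$, $a:A\to\{X,Y,Z\}$) to integers, initially zero, and a counter $N=0$. For $i=1,\dots,m$: with $P=P^{(i)}$ compute $c=(N-Z)/2$ where $Z=\sum_{A\subseteq\operatorname{supp}(P)}(-2)^{|A|}\sum_{a\in\mathcal{L}_P(A)}D[(A,a)]$ and $\mathcal{L}_P(A)=\{a:A\to\{X,Y,Z\}: a(j)\neq P_j\ \forall j\in A\}$; if $c>0$, scan $j=1,\dots,i-1$, testing whether $|\operatorname{conf}(P^{(j)},P^{(i)})|$ is odd, and return the first pair $(j,i)$ for which it is; otherwise increment $D[(A,P^{(i)}|_A)]$ by one for every $A\subseteq\operatorname{supp}(P^{(i)})$ and set $N\leftarrow N+1$. If the loop finishes, return ``all commute''. Then this procedure returns ``all commute'' if and only if all the input strings pairwise commute, and if it returns a pair $(j,i)$, then $P^{(j)}P^{(i)}=-P^{(i)}P^{(j)}$.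
   Context: A phase-free $n$-qubit Pauli string is a word $P=(P_1,\dots,P_n)\in\{I,X,Y,Z\}^n$ with $I,X,Y,Z$ the identity and the three Pauli matrices, identified with $P_1\otimes\cdots\otimes P_n$. Its support is $\operatorname{supp}(P)=\{j: P_j\neq I\}$. The conflict set of $P,Q$ is $\operatorname{conf}(P,Q)=\{j: P_j\neq I,\ Q_j\neq I,\ P_j\neq Q_j\}$; two Pauli strings anticommute exactly when their conflict set has odd size and commute otherwise. *)

(* Defs.v *)
From HB Require Import structures.
From mathcomp Require Import all_boot all_order all_algebra all_field.
Set Implicit Arguments. Unset Strict Implicit. Unset Printing Implicit Defensive.
Import Order.TTheory GRing.Theory Num.Theory.

Inductive pauli := PI | PX | PY | PZ.

Definition pauli_to_ord (p : pauli) : 'I_4 :=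
  match p with PI => inord 0 | PX => inord 1 | PY => inord 2 | PZ => inord 3 end.
Definition ord_to_pauli (k : 'I_4) : pauli :=
  match val k with 0 => PI | 1 => PX | 2 => PY | _ => PZ end.
Lemma pauli_to_ordK : cancel pauli_to_ord ord_to_pauli.
Proof. by case; rewrite /ord_to_pauli /= inordK. Qed.

HB.instance Definition _ := Finite.copy pauli (can_type pauli_to_ordK).

Definition pstring (n : nat) := {ffun 'I_n -> pauli}.

Definition supp n (P : pstring n) : {set 'I_n} := [set j | P j != PI].

Definition conf n (P Q : pstring n) : {set 'I_n} :=
  [set j | [&& P j != PI, Q j != PI & P j != Q j]].

Definition anticommb n (P Q : pstring n) : bool := odd #|conf P Q|.

Local Open Scope ring_scope.

(* entry (r,c) of the 2x2 Pauli matrix, with basis index false = |0>, true = |1> *)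
Definition sigma (p : pauli) (r c : bool) : algC :=
  match p with
  | PI => if r == c then 1 else 0
  | PX => if r == c then 0 else 1
  | PY => if r == c then 0 else (if r then 'i else - 'i)
  | PZ => if r == c then (if r then -1 else 1) else 0
  end.

(* bit of basis index r : 'I_(2^n) for qubit k (qubit 0 is the most significant) *)
Definition qbit n (r : 'I_(2 ^ n)) (k : 'I_n) : bool := odd (r %/ 2 ^ (n - k.+1))%N.

(* the matrix P_1 (x) ... (x) P_n in 'M_(2^n), entrywise *)
Definition pmx n (P : pstring n) : 'M[algC]_(2 ^ n) :=
  \matrix_(r, c) \prod_(k < n) sigma (P k) (qbit r k) (qbit c k).

(* A labeled pattern (A,a), A ⊆ {1..n}, a : A -> {X,Y,Z}, is encoded as the
   Pauli string equal to a(j) on A and I outside A (a bijection). *)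
Definition pattern n (A : {set 'I_n}) (a : pstring n) : bool :=
  (supp a == A).

Definition LP n (P : pstring n) (A : {set 'I_n}) : {set pstring n} :=
  [set a | pattern A a && [forall j in A, a j != P j]].

Definition restrict n (P : pstring n) (A : {set 'I_n}) : pstring n :=
  [ffun j => if j \in A then P j else PI].

Definition dict n := pstring n -> int.

Definition Zval n (D : dict n) (P : pstring n) : int :=
  \sum_(A : {set 'I_n} | A \subset supp P) (-2) ^+ #|A| * \sum_(a in LP P A) D a.

Definition cval n (D : dict n) (N : int) (P : pstring n) : rat :=
  (N - Zval D P)%:~R / 2.

Definition update n (D : dict n) (P : pstring n) : dict n :=
  fun a => D a + (#|[set A : {set 'I_n} | (A \subset supp P) && (a == restrict P A)]|)%:Z.

Inductive result := AllCommute | Pair of nat & nat | ScanFailed.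

(* scan j = 1..i-1 over the previous strings, return the first (1-based) j with
   |conf(P^(j), P^(i))| odd *)
Definition scan n (prev : seq (pstring n)) (P : pstring n) : option nat :=
  let k := find (fun Q => anticommb Q P) prev in
  if (k < size prev)%N then Some k.+1 else None.

(* prev = P^(1..i-1) already processed, rest = P^(i..m) still to process *)
Fixpoint run n (D : dict n) (N : int) (prev rest : seq (pstring n)) : result :=
  match rest with
  | [::] => AllCommute
  | P :: rest' =>
      if 0 < cval D N P then
        match scan prev P with
        | Some j => Pair j (size prev).+1
        | None => ScanFailed
        end
      else run (update D P) (N + 1) (rcons prev P) rest'
  end.

Definition certify n (Ps : seq (pstring n)) : result :=
  run (fun _ => 0) 0 [::] Ps.

Definition pid n : pstring n := [ffun => PI].

(* Main.v *)
Require Import Defs.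
From HB Require Import structures.
From mathcomp Require Import all_boot all_order all_algebra all_field.
From mathcomp Require Import ring zify.
Import Order.TTheory GRing.Theory Num.Theory.
Local Open Scope ring_scope.

Definition mm (p q : pauli) (r c : bool) : algC :=
  \sum_(b : bool) sigma p r b * sigma q b c.

Definition peqb (p q : pauli) : bool :=
  match p, q with PI, PI | PX, PX | PY, PY | PZ, PZ => true | _, _ => false end.

Lemma peqbE (p q : pauli) : (p == q) = peqb p q.
Proof.
case: p; case: q => /=; first [ exact: eqxx | apply/negbTE/eqP; discriminate ].
Qed.

Lemma mm_comm p q r c :
  mm p q r c = (if [&& p != PI, q != PI & p != q] then -1 else 1) * mm q p r c.
Proof.
case: p; case: q; case: r; case: c; rewrite /mm.
all: rewrite !big_bool /sigma !peqbE /=; ring.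
Qed.

Lemma sum_subsets (I : finType) (C : {set I}) :
  \sum_(A : {set I} | A \subset C) (-2) ^+ #|A| = (-1) ^+ #|C| :> int.
Proof.
have := @bigA_distr int 0 1 *%R +%R I (fun i : I => if i \in C then -2 else 0) (fun _ => 1).
have E1 : \prod_(i : I) ((if i \in C then -2 else 0) + 1) = (-1) ^+ #|C| :> int.
  rewrite (eq_bigr (fun i => if i \in C then -1 else 1)); last first.
    by move=> i _; case: (i \in C).
  by rewrite -big_mkcond prodr_const.
rewrite E1 => ->.
rewrite [LHS]big_mkcond /=; apply: eq_big => [J|J _]; first by [].
rewrite -big_mkcond /=.
case: (boolP (J \subset C)) => JC.
  rewrite (eq_bigr (fun _ => -2)); first by rewrite prodr_const.
  by move=> i iJ; rewrite (subsetP JC i iJ).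
have [i /andP[iJ iC]] : exists i, (i \in J) && (i \notin C).
  by move/subsetPn: JC => [i iJ iC]; exists i; rewrite iJ iC.
by rewrite (bigD1 i) //= (negbTE iC) mul0r.
Qed.
Lemma bits_inj (n s t : nat) : (s < 2 ^ n)%N -> (t < 2 ^ n)%N ->
  (forall m, (m < n)%N -> odd (s %/ 2 ^ m) = odd (t %/ 2 ^ m)) -> s = t.
Proof.
elim: n s t => [|n IH] s t.
  by rewrite expn0 !ltnS !leqn0 => /eqP -> /eqP ->.
move=> hs ht hb.
have h0 := hb 0%N isT; rewrite !expn0 !divn1 in h0.
have hh : s./2 = t./2.
  apply: IH.
  - by rewrite -divn2 ltn_divLR // -expnSr.
  - by rewrite -divn2 ltn_divLR // -expnSr.
  move=> m hm; rewrite -!divn2 -!divnMA -expnS; exact: hb.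
by rewrite -[s]odd_double_half -[t]odd_double_half h0 hh.
Qed.

Definition bitsf {n} (s : 'I_(2 ^ n)) : {ffun 'I_n -> bool} := [ffun k => qbit s k].

Lemma bitsf_inj n : injective (@bitsf n).
Proof.
move=> s t /ffunP E; apply: val_inj; apply: (@bits_inj n) => [||m hm]; rewrite ?ltn_ord //.
have hk : (n - m.+1 < n)%N by lia.
have := E (Ordinal hk); rewrite !ffunE /qbit /=.
by have -> : (n - (n - m.+1).+1 = m)%N by lia.
Qed.

Lemma bitsf_bij n : bijective (@bitsf n).
Proof.
apply: inj_card_bij; first exact: bitsf_inj.
by rewrite card_ffun card_bool !card_ord.
Qed.

Lemma sum_bits n (F : {ffun 'I_n -> bool} -> algC) :
  \sum_(s : 'I_(2 ^ n)) F (bitsf s) = \sum_(f : {ffun 'I_n -> bool}) F f.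
Proof.
by rewrite (reindex (@bitsf n)) //; apply: onW_bij; exact: bitsf_bij.
Qed.

Lemma pmx_mulE n (P Q : pstring n) r c :
  (pmx P *m pmx Q) r c = \prod_(k < n) mm (P k) (Q k) (qbit r k) (qbit c k).
Proof.
rewrite /mm [RHS]bigA_distr_bigA /=.
rewrite -(@sum_bits n (fun f : {ffun 'I_n -> bool} =>
   \prod_(k < n) (sigma (P k) (qbit r k) (f k) * sigma (Q k) (f k) (qbit c k)))).
rewrite !mxE; apply: eq_bigr => s _.
by rewrite !mxE -big_split /=; apply: eq_bigr => k _; rewrite ffunE.
Qed.

Lemma pmx_anti n (P Q : pstring n) : anticommb P Q ->
  pmx P *m pmx Q = - (pmx Q *m pmx P).
Proof.
rewrite /anticommb => hodd; apply/matrixP => r c.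
rewrite [RHS]mxE !pmx_mulE.
rewrite (eq_bigr (fun k => (if k \in conf P Q then -1 else 1) *
    mm (Q k) (P k) (qbit r k) (qbit c k))); last first.
  by move=> k _; rewrite mm_comm inE.
rewrite big_split /= -big_mkcond prodr_const /=.
by rewrite -signr_odd hodd expr1 mulN1r.
Qed.

Section Alg.
Variable n : nat.
Implicit Types P Q a : pstring n.

Lemma supp_restrict Q (A : {set 'I_n}) : A \subset supp Q -> supp (restrict Q A) = A.
Proof.
move=> hA; apply/setP => j; rewrite !inE ffunE.
case: (boolP (j \in A)) => hj; last by rewrite eqxx.
by have := subsetP hA j hj; rewrite inE.
Qed.

Lemma cnt_eq Q a (A : {set 'I_n}) : supp a = A ->
  #|[set B : {set 'I_n} | (B \subset supp Q) && (a == restrict Q B)]| =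
  (if (A \subset supp Q) && (a == restrict Q A) then 1 else 0)%N.
Proof.
move=> ha; case: ifP => h.
  have -> : [set B : {set 'I_n} | (B \subset supp Q) && (a == restrict Q B)] = [set A].
    apply/setP => B; rewrite !inE; apply/idP/idP.
      move=> /andP[hB /eqP ea]; rewrite -ha ea supp_restrict //.
    by move=> /eqP ->.
  by rewrite cards1.
have -> : [set B : {set 'I_n} | (B \subset supp Q) && (a == restrict Q B)] = set0.
  apply/setP => B; rewrite !inE; apply/negbTE/negP => /andP[hB /eqP ea].
  move: h; have eB : B = A by rewrite -ha ea supp_restrict.
  by rewrite -eB hB ea eqxx.
by rewrite cards0.
Qed.

Lemma conf_subl Q P : conf Q P \subset supp Q.
Proof. by apply/subsetP => j; rewrite !inE => /and3P[]. Qed.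
Lemma conf_subr Q P : conf Q P \subset supp P.
Proof. by apply/subsetP => j; rewrite !inE => /and3P[]. Qed.

Lemma LP_restrict Q P (A : {set 'I_n}) : A \subset supp Q -> A \subset supp P ->
  (restrict Q A \in LP P A) = (A \subset conf Q P).
Proof.
move=> hQ hP; rewrite inE /pattern supp_restrict // eqxx /=.
apply/forall_inP/subsetP.
  move=> h j hj; have := h j hj; rewrite ffunE hj => hne.
  have := subsetP hQ j hj; have := subsetP hP j hj; rewrite !inE => -> -> /=.
  exact: hne.
move=> h j hj; rewrite ffunE hj; have := h j hj; rewrite inE => /and3P[].
by [].
Qed.

Lemma sum_ind (T : finType) (S : {set T}) (x : T) :
  \sum_(a in S) (if a == x then 1 else 0) = (if x \in S then 1 else 0) :> int.
Proof.
case: ifP => hx.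
  rewrite (bigD1 x) //= eqxx big1 ?addr0 // => a /andP[_ /negbTE ->] //.
by rewrite big1 // => a ha; case: eqP => // e; rewrite -e ha in hx.
Qed.

Lemma Zval_update (D : dict n) Q P :
  Zval (update D Q) P = Zval D P + (-1) ^+ #|conf Q P|.
Proof.
rewrite /Zval /update.
under eq_bigr => A _ do rewrite big_split mulrDr /=.
rewrite big_split /=; congr (_ + _).
rewrite -sum_subsets [RHS]big_mkcond [LHS]big_mkcond; apply: eq_bigr => A _ /=.
case: (boolP (A \subset supp P)) => hA; last first.
  case: (boolP (A \subset conf Q P)) => // hc.
  by move: hA; rewrite (subset_trans hc (conf_subr Q P)).
rewrite (eq_bigr (fun a => if a == restrict Q A then
            (if A \subset supp Q then 1 else 0) else 0)); last first.
  move=> a; rewrite inE /pattern => /andP[/eqP ha _].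
  rewrite (cnt_eq Q a A ha).
  by case: (A \subset supp Q); case: (a == restrict Q A).
case: (boolP (A \subset supp Q)) => hQ; last first.
  rewrite big1; last by move=> a _; case: ifP.
  case: (boolP (A \subset conf Q P)) => hc; last by rewrite mulr0.
  by move: hQ; rewrite (subset_trans hc (conf_subl Q P)).
rewrite sum_ind LP_restrict //.
by case: (A \subset conf Q P); rewrite ?mulr1 ?mulr0.
Qed.

End Alg.

Section Run.
Variable n : nat.
Implicit Types P Q : pstring n.

Definition good (s : seq (pstring n)) := pairwise (fun Q P => ~~ anticommb Q P) s.

Lemma count_sign (prev : seq (pstring n)) P :
  (size prev)%:Z - \sum_(Q <- prev) (-1) ^+ #|conf Q P| =
  2 * (count (fun Q => anticommb Q P) prev)%:Z.
Proof.
elim: prev => [|Q prev IH]; first by rewrite big_nil.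
rewrite big_cons /= -signr_odd /anticommb.
have -> : ((size prev).+1 : int) = 1 + (size prev)%:Z by rewrite -addn1 PoszD addrC.
rewrite PoszD mulrDr -IH.
by case: (odd #|conf Q P|) => /=; ring.
Qed.

Lemma cval_pos (D : dict n) N prev P :
  (forall P', Zval D P' = \sum_(Q <- prev) (-1) ^+ #|conf Q P'|) ->
  N = (size prev)%:Z ->
  (0 < cval D N P) = has (fun Q => anticommb Q P) prev.
Proof.
move=> hZ hN; rewrite /cval hZ hN count_sign has_count.
rewrite intrM mulrAC divff // mul1r.
by rewrite ltr0n.
Qed.

Lemma run_spec (rest prev : seq (pstring n)) (D : dict n) N :
  (forall P', Zval D P' = \sum_(Q <- prev) (-1) ^+ #|conf Q P'|) ->
  N = (size prev)%:Z -> good prev ->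
  (run D N prev rest = AllCommute <-> good (prev ++ rest)) /\
  (forall j i, run D N prev rest = Pair j i ->
     anticommb (nth (pid n) (prev ++ rest) j.-1) (nth (pid n) (prev ++ rest) i.-1)).
Proof.
elim: rest prev D N => [|P rest IH] prev D N hZ hN hg.
  by rewrite cats0 /=; split.
rewrite /= (@cval_pos D N prev P hZ hN).
case: ifP => hh.
  rewrite /scan -has_find hh; split.
    split => // hg'; move: hg'; rewrite /good pairwise_cat => /and3P[hall _ _].
    move/hasP: hh => [Q hQ hQP].
    by move/allrelP: hall => /(_ Q P hQ); rewrite inE eqxx hQP => /(_ isT).
  move=> j i [<- <-] /=.
  rewrite !nth_cat -has_find hh ltnn subnn /=.
  exact: (nth_find (pid n) hh).
have hZ' : forall P', Zval (update D P) P' = \sum_(Q <- rcons prev P) (-1) ^+ #|conf Q P'|.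
  by move=> P'; rewrite Zval_update big_rcons /= hZ.
have hN' : N + 1 = (size (rcons prev P))%:Z by rewrite hN size_rcons -addn1 PoszD.
have hg' : good (rcons prev P).
  rewrite /good pairwise_rcons; apply/andP; split => //.
  apply/allP => Q hQ; apply/negP => hQP; move/negbT: hh => /negP; apply; apply/hasP; by exists Q.
by have := IH _ _ _ hZ' hN' hg'; rewrite cat_rcons.
Qed.

Lemma conf_sym P Q : conf P Q = conf Q P.
Proof.
apply/setP => j; rewrite !inE [P j == Q j]eq_sym.
by case: (P j != PI); case: (Q j != PI).
Qed.

Lemma conf_self P : conf P P = set0.
Proof. by apply/setP => j; rewrite !inE eqxx !andbF. Qed.

Lemma good_nth (s : seq (pstring n)) : good s <->
  (forall j i : nat, (j < size s)%N -> (i < size s)%N ->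
        ~~ anticommb (nth (pid n) s j) (nth (pid n) s i)).
Proof.
split; last first.
  by move=> H; apply/(pairwiseP (pid n)) => j i hj hi _; apply: H.
move/(pairwiseP (pid n)) => H j i hj hi.
case: (ltngtP j i) => hji.
- exact: H.
- by rewrite /anticommb conf_sym; apply: H.
- by rewrite hji /anticommb conf_self cards0.
Qed.

End Run.

Theorem corollary1 (n : nat) (Ps : seq (pstring n)) :
  (certify Ps = AllCommute <->
     (forall j i : nat, (j < size Ps)%N -> (i < size Ps)%N ->
        ~~ anticommb (nth (pid n) Ps j) (nth (pid n) Ps i)))
  /\
  (forall j i : nat, certify Ps = Pair j i ->
     pmx (nth (pid n) Ps j.-1) *m pmx (nth (pid n) Ps i.-1)
     = - (pmx (nth (pid n) Ps i.-1) *m pmx (nth (pid n) Ps j.-1))).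
Proof.
have hZ : forall P', Zval (fun _ => 0) P' = \sum_(Q <- [::] : seq (pstring n)) (-1) ^+ #|conf Q P'|.
  move=> P'; rewrite big_nil /Zval big1 // => A _.
  by rewrite big1 ?mulr0.
have [h1 h2] := @run_spec n Ps [::] (fun _ => 0) 0 hZ erefl isT.
split.
  rewrite /certify; apply: iff_trans h1 _; exact: good_nth.
move=> j i hr; apply: pmx_anti; exact: h2.
Qed.
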